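(* Let $\mathcal{T}$ be a finite nonempty set of positive integers and let $A\in\mathbb{R}$ with $|A|\ne1$ and $A\ne0$. Then $$\frac{\big(\sum_{t\in\mathcal{T}}A^t\big)^2}{\sum_{t\in\mathcal{T}}A^{2t}}\le\frac{1+|A|}{\big|1-|A|\big|}.$$ *)

(* Defs.v *)
From HB Require Import structures.
From mathcomp Require Import all_boot all_order all_algebra.
From mathcomp Require Export finmap.

(* Main.v *)
Require Import Defs.
From mathcomp Require Import zify ring lra.
From HB Require Import structures.
From mathcomp Require Import all_boot all_order all_algebra.
From mathcomp Require Import finmap.
Import Order.TTheory GRing.Theory Num.Theory.
Local Open Scope ring_scope.

Section Aux.
Variable R : realFieldType.

Lemma geo (b : R) n : 0 <= b < 1 -> \sum_(k < n) b ^+ k <= (1 - b)^-1.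
Proof.
move=> /andP[b0 b1]; have h1b : 0 < 1 - b by rewrite subr_gt0.
elim: n => [|n IH]; first by rewrite big_ord0 invr_ge0 ltW.
rewrite big_ord_recl expr0.
have -> : \sum_(i < n) b ^+ (lift ord0 i) = b * \sum_(i < n) b ^+ i.
  by rewrite mulr_sumr; apply: eq_bigr => i _; rewrite lift0 exprS.
apply: (le_trans (lerD (lexx 1) (ler_wpM2l b0 IH))).
rewrite -subr_ge0.
have -> : (1 - b)^-1 - (1 + b * (1 - b)^-1) = 0.
  by field; rewrite gt_eqF.
by [].
Qed.

Lemma subsum (r q : seq nat) (P : pred nat) (F : nat -> R) :
  uniq r -> uniq q -> (forall t, t \in r -> P t -> t \in q) ->
  (forall t, 0 <= F t) ->
  \sum_(t <- r | P t) F t <= \sum_(t <- q) F t.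
Proof.
move=> ur uq sub F0.
rewrite -big_filter.
have pe : perm_eq [seq t <- r | P t] [seq t <- q | t \in [seq t <- r | P t]].
  apply: uniq_perm; first exact: filter_uniq.
    exact: filter_uniq.
  move=> t; rewrite !mem_filter.
  case: (boolP (P t && (t \in r))) => [/andP[pt tr]|] /=; last by [].
  by rewrite sub.
rewrite (perm_big _ pe) big_filter.
rewrite [X in _ <= X](bigID (fun t => t \in [seq t <- r | P t])) /=.
rewrite lerDl; apply: sumr_ge0 => t _; exact: F0.
Qed.

Lemma bndN (r : seq nat) : exists N, forall t, t \in r -> (t < N)%N.
Proof.
elim: r => [|x r [N HN]]; first by exists 0%N.
exists (maxn x N).+1 => t; rewrite in_cons => /orP[/eqP->|/HN tN].
  by rewrite ltnS leq_maxl.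
by rewrite ltnS; apply: leq_trans (ltnW tN) _; rewrite ?leq_maxr // -ltnS ltnS;
   apply: (leq_trans tN); rewrite leq_maxr.
Qed.

Lemma right_geo (b : R) (r : seq nat) s : 0 <= b < 1 -> uniq r ->
  \sum_(t <- r | (t <= s)%N) b ^+ (s - t) <= (1 - b)^-1.
Proof.
move=> hb ur; have b0 : 0 <= b by case/andP: hb.
have H := (@subsum r (iota 0 s.+1) (fun t => (t <= s)%N) (fun t => b ^+ (s - t)) ur (iota_uniq _ _)
  (fun t _ ts => ltac:(by rewrite mem_iota)) (fun t => exprn_ge0 _ b0)).
apply: (le_trans H).
have -> : \sum_(t <- iota 0 s.+1) b ^+ (s - t) = \sum_(0 <= t < s.+1) b ^+ (s - t).
  by rewrite /index_iota subn0.
rewrite big_nat_rev /=.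
rewrite (@eq_big_nat _ _ _ 0 s.+1 _ (fun t => b ^+ t)); last first.
  by move=> t /andP[_ ts]; congr (_ ^+ _); rewrite add0n subSS; lia.
by rewrite big_mkord geo.
Qed.

Lemma left_geo (b : R) (r : seq nat) s : 0 <= b < 1 -> uniq r ->
  \sum_(t <- r | (s <= t)%N) b ^+ (t - s) <= (1 - b)^-1.
Proof.
move=> hb ur; have b0 : 0 <= b by case/andP: hb.
have [N HN] := bndN r.
have H := (@subsum r (iota s N) (fun t => (s <= t)%N) (fun t => b ^+ (t - s)) ur (iota_uniq _ _)
  (fun t tr st => ltac:(rewrite mem_iota st /=; have := HN t tr; lia)) (fun t => exprn_ge0 _ b0)).
apply: (le_trans H).
rewrite -{1}(addn0 s) iotaDl big_map.
under eq_bigr do rewrite addKn.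
by have G := @geo b N hb; apply: le_trans G; rewrite (_ : iota 0 N = index_iota 0 N) ?big_mkord // /index_iota subn0.
Qed.

Definition dd (s t : nat) := ((s - t) + (t - s))%N.

Lemma main_gen (r : seq nat) (x : nat -> R) (b : R) (D : nat -> nat -> bool) :
  uniq r -> 0 <= b < 1 -> (forall t, 0 <= x t) ->
  (forall s t, D s t || D t s) ->
  (forall s t, D s t -> x s * x t <= x s ^+ 2 * b ^+ dd s t) ->
  (forall s, \sum_(t <- r | D s t) b ^+ dd s t <= (1 - b)^-1) ->
  (\sum_(t <- r) x t) ^+ 2 <= (1 + b) / (1 - b) * \sum_(t <- r) x t ^+ 2.
Proof.
move=> ur hb x0 Dtot Dx Dsum.
have b0 : 0 <= b by case/andP: hb.
have h1b : 0 < 1 - b by case/andP: hb => _; rewrite subr_gt0.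
have ddC s t : dd s t = dd t s by rewrite /dd addnC.
have E : (\sum_(t <- r) x t) ^+ 2 = \sum_(s <- r) \sum_(t <- r) x s * x t.
  by rewrite expr2 mulr_suml; apply: eq_bigr => s _; rewrite mulr_sumr.
rewrite E.
apply: (@le_trans _ _ (\sum_(s <- r) \sum_(t <- r) (if D s t then x s ^+ 2 * b ^+ dd s t else 0)
   + \sum_(s <- r) \sum_(t <- r) (if D s t then 0 else x t ^+ 2 * b ^+ dd s t))).
  rewrite -big_split; apply: ler_sum => s _; rewrite -big_split; apply: ler_sum => t _ /=.
  case: ifP => hD; first by rewrite addr0; exact: Dx.
  have hD' : D t s by move: (Dtot s t); rewrite hD.
  by rewrite add0r mulrC ddC; exact: Dx.
have S1 : \sum_(s <- r) \sum_(t <- r) (if D s t then x s ^+ 2 * b ^+ dd s t else 0)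
    <= \sum_(s <- r) x s ^+ 2 * (1 - b)^-1.
  apply: ler_sum => s _.
  have -> : \sum_(t <- r) (if D s t then x s ^+ 2 * b ^+ dd s t else 0)
     = x s ^+ 2 * \sum_(t <- r | D s t) b ^+ dd s t.
    by rewrite [in RHS]big_mkcond mulr_sumr; apply: eq_bigr => t _; case: ifP; rewrite ?mulr0.
  by apply: ler_wpM2l; [exact: sqr_ge0 | exact: Dsum].
have S2 : \sum_(s <- r) \sum_(t <- r) (if D s t then 0 else x t ^+ 2 * b ^+ dd s t)
    <= \sum_(t <- r) x t ^+ 2 * ((1 - b)^-1 - 1).
  rewrite exchange_big /= big_seq [X in _ <= X]big_seq.
  apply: ler_sum => t tr.
  have -> : \sum_(s <- r) (if D s t then 0 else x t ^+ 2 * b ^+ dd s t)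
     = x t ^+ 2 * \sum_(s <- r) (if D s t then 0 else b ^+ dd s t).
    by rewrite mulr_sumr; apply: eq_bigr => s _; case: ifP; rewrite ?mulr0.
  apply: ler_wpM2l; first exact: sqr_ge0.
  have Dtt : D t t by move: (Dtot t t); rewrite orbb.
  rewrite (bigD1_seq t tr ur) /= Dtt add0r.
  have := Dsum t; rewrite big_mkcond (bigD1_seq t tr ur) /= Dtt /dd subnn expr0.
  move=> H; rewrite lerBrDl; apply: le_trans H; rewrite lerD2l.
  apply: ler_sum => s st; case: ifP => hD; first by case: ifP => _; rewrite ?exprn_ge0.
  have -> : D t s by move: (Dtot s t); rewrite hD.
  by rewrite addnC.
apply: le_trans (lerD S1 S2) _.
rewrite -!mulr_suml -mulrDr mulrC.
have -> : (1 - b)^-1 + ((1 - b)^-1 - 1) = (1 + b) / (1 - b) by field; rewrite gt_eqF.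
by [].
Qed.
End Aux.

Local Open Scope fset_scope.

Theorem proposition4 (R : realFieldType) (T : {fset nat}) (A : R)
  (hT0 : T != fset0) (hTpos : forall t, t \in T -> (0 < t)%N)
  (hA1 : `|A| != 1) (hA0 : A != 0) :
  (\sum_(t <- T) A ^+ t) ^+ 2 / (\sum_(t <- T) A ^+ (2 * t)) <=
  (1 + `|A|) / `|1 - `|A| |.
Proof.
set a := `|A|.
have a0 : 0 < a by rewrite normr_gt0.
have ur : uniq T := fset_uniq T.
have EQ : \sum_(t <- T) A ^+ (2 * t) = \sum_(t <- T) (a ^+ t) ^+ 2.
  apply: eq_bigr => t _.
  rewrite mulnC exprM /a -normrX real_normK ?num_real //.
have [t0 t0T] : exists t0, t0 \in T.
  case: (fset_0Vmem T) => [h|[t0 h]]; last by exists t0.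
  by move: hT0; rewrite h eqxx.
have Qpos : 0 < \sum_(t <- T) (a ^+ t) ^+ 2.
  rewrite (bigD1_seq t0 t0T ur) /=.
  apply: ltr_pwDl; first by rewrite exprn_gt0 // exprn_gt0.
  by apply: sumr_ge0 => t _; exact: sqr_ge0.
rewrite EQ ler_pdivrMr //.
have P2 : (\sum_(t <- T) A ^+ t) ^+ 2 <= (\sum_(t <- T) a ^+ t) ^+ 2.
  rewrite -real_normK ?num_real // ler_sqr ?nnegrE ?normr_ge0 ?sumr_ge0 //; last first.
    by move=> t _; rewrite exprn_ge0 // ltW.
  apply: le_trans (ler_norm_sum _ _ _) _.
  by apply: ler_sum => t _; rewrite normrX.
apply: le_trans P2 _.
have x0 : forall t, 0 <= a ^+ t by move=> t; rewrite exprn_ge0 // ltW.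
case: (ltrgtP a 1) => ha; last by move: hA1; rewrite -/a ha eqxx.
  apply: (@main_gen R T (fun t => a ^+ t) a (fun s t => (s <= t)%N) ur _ x0).
  + by rewrite ltW.
  + by move=> s t; exact: leq_total.
  + move=> s t st; rewrite /dd (eqP (_ : s - t == 0)%N) ?add0n; last by rewrite subn_eq0.
    by rewrite -{1}(subnKC st) exprD mulrA expr2.
  + move=> s; rewrite (eq_bigr (fun t => a ^+ (t - s))).
      by apply: left_geo => //; rewrite ltW.
    by move=> t st; rewrite /dd (eqP (_ : s - t == 0)%N) ?add0n // subn_eq0.
  have -> : (1 + a) / (a - 1) = (1 + a^-1) / (1 - a^-1).
    by field; rewrite ?gt_eqF // ?subr_gt0 // (gt_eqF a0).
  apply: (@main_gen R T (fun t => a ^+ t) a^-1 (fun s t => (t <= s)%N) ur _ x0).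
  + by rewrite invr_ge0 ltW // invf_lt1.
  + by move=> s t; rewrite orbC; exact: leq_total.
  + move=> s t ts; rewrite /dd (eqP (_ : t - s == 0)%N) ?addn0; last by rewrite subn_eq0.
    have [k ->] : exists k, s = (t + k)%N by exists (s - t)%N; rewrite subnKC.
    rewrite addKn !exprD exprVn expr2.
    rewrite le_eqVlt; apply/orP; left; apply/eqP.
    have hk : a ^+ k != 0 by rewrite expf_neq0 // gt_eqF.
    have ht : a ^+ t != 0 by rewrite expf_neq0 // gt_eqF.
    by field.
  + move=> s; rewrite (eq_bigr (fun t => a^-1 ^+ (s - t))).
      by apply: right_geo => //; rewrite invr_ge0 ltW // invf_lt1.
    by move=> t ts; rewrite /dd (eqP (_ : t - s == 0)%N) ?addn0 // subn_eq0.
Qed.
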